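(* Let $\mathbf A$ be regular of bandwidth $(p,q)$ and let $L\le R$ be finite integers with $R-L\ge\tau$. Then $$\mathcal M_{L,R}=\operatorname{Span}\big(\mathbf P_{L,R}\mathcal M_{-\infty,R}\cup\mathbf P_{L,R}\mathcal M_{L,\infty}\big).$$
   Context: Fix $d\ge1$. $\mathcal V^S_d$: doubly infinite sequences $\Psi=\{\psi_j\}_{j\in\mathbb Z}$, $\psi_j\in\mathbb C^d$. A matrix Laurent polynomial of bandwidth $(p,q)$ is $\sum_{r=p}^qa_rw^r$, integers $p\le q$, $a_r$ complex $d\times d$, $a_p\ne0\ne a_q$; its BBL transformation is $(\mathbf A\Psi)_j=\sum_ra_r\psi_{j+r}$. $\mathbf A$ is regular if $\det(w^{-p}A(w,w^{-1}))$ is not the zero polynomial. $p'=\min(p,0)$, $q'=\max(0,q)$, $\tau=q'-p'$. For $-\infty\le L\le R\le\infty$: $\mathcal V_{L,R}$ = sequences with $\psi_j=0$ for $j\notin[L,R]$; $\mathbf P_{L,R}$ = projection onto $\mathcal V_{L,R}$ zeroing entries outside $[L,R]$; bulk solution space $\mathcal M_{L,R}=\ker(\mathbf P_{L-p',R-q'}\mathbf A|_{\mathcal V_{L,R}})$ (infinite endpoints stay infinite). *)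

(* Defs.v *)
(* Complex numbers are modelled by an arbitrary
   numClosedFieldType C. *)
From HB Require Import structures.
From Stdlib Require Lists.List.
From mathcomp Require Import all_boot all_order all_algebra.
Set Implicit Arguments. Unset Strict Implicit. Unset Printing Implicit Defensive.
Import Order.TTheory GRing.Theory Num.Theory.
Local Open Scope ring_scope.

Definition dseq (C : numClosedFieldType) (d : nat) := int -> 'cV[C]_d.

Definition bandwidth (C : numClosedFieldType) (d : nat)
    (a : int -> 'M[C]_d) (p q : int) : Prop :=
  p <= q /\ a p != 0 /\ a q != 0 /\ (forall r : int, (r < p) || (q < r) -> a r = 0).

Definition BBL (C : numClosedFieldType) (d : nat)
    (a : int -> 'M[C]_d) (p q : int) (psi : dseq C d) : dseq C d :=
  fun j => \sum_(k < (absz (q - p)).+1) (a (p + k%:Z) *m psi (j + (p + k%:Z))).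

(* w^{-p} A(w, w^{-1}) as a matrix of polynomials in w *)
Definition shifted_symbol (C : numClosedFieldType) (d : nat)
    (a : int -> 'M[C]_d) (p q : int) : 'M[{poly C}]_d :=
  \matrix_(i, j) \sum_(k < (absz (q - p)).+1) ((a (p + k%:Z)) i j)%:P * 'X^k.

Definition regular (C : numClosedFieldType) (d : nat)
    (a : int -> 'M[C]_d) (p q : int) : Prop :=
  \det (shifted_symbol a p q) != 0.

Definition pprime (p : int) : int := Num.min p 0.
Definition qprime (q : int) : int := Num.max 0 q.
Definition tau (p q : int) : int := qprime q - pprime p.

(* Extended endpoints: None on the left means -oo, None on the right means +oo *)
Definition in_rangeb (L R : option int) (j : int) : bool :=
  (if L is Some l then l <= j else true) && (if R is Some r then j <= r else true).

Definition inV (C : numClosedFieldType) (d : nat) (L R : option int)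
    (psi : dseq C d) : Prop :=
  forall j, ~~ in_rangeb L R j -> psi j = 0.

Definition proj (C : numClosedFieldType) (d : nat) (L R : option int)
    (psi : dseq C d) : dseq C d :=
  fun j => if in_rangeb L R j then psi j else 0.

Definition shiftE (L : option int) (s : int) : option int := omap (fun l => l - s) L.

Definition bulk (C : numClosedFieldType) (d : nat)
    (a : int -> 'M[C]_d) (p q : int) (L R : option int) (psi : dseq C d) : Prop :=
  inV L R psi /\
  proj (shiftE L (pprime p)) (shiftE R (qprime q)) (BBL a p q psi) = (fun _ => 0).

Definition in_span (C : numClosedFieldType) (d : nat)
    (S : dseq C d -> Prop) (psi : dseq C d) : Prop :=
  exists s : seq (C * dseq C d),
    (forall x, Stdlib.Lists.List.In x s -> S x.2) /\
    psi = (fun j => \sum_(x <- s) x.1 *: x.2 j).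

(* Main.v *)
Require Import Defs.
From HB Require Import structures.
From mathcomp Require Import all_boot all_order all_algebra.
From mathcomp Require Import zify ring lra.
From Stdlib Require Import FunctionalExtensionality ClassicalEpsilon.
Import Order.TTheory GRing.Theory Num.Theory.
Set Implicit Arguments. Unset Strict Implicit. Unset Printing Implicit Defensive.
Local Open Scope ring_scope.

Section DS.
Variables (C : numClosedFieldType) (d : nat) (a : int -> 'M[C]_d) (p q : int).
Hypothesis hpq : p <= q.
Hypothesis hout : forall r : int, (r < p) || (q < r) -> a r = 0.

Local Notation P' := (pprime p).
Local Notation Q' := (qprime q).
Local Notation tau := (tau p q).

Definition eqat (psi : dseq C d) (i : int) := BBL a p q psi (i - P').

Lemma tau_ge0 : 0 <= tau.
Proof. rewrite /tau /pprime /qprime; lia. Qed.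

Lemma eqat_local psi phi i :
  (forall j, i <= j -> j <= i + tau -> psi j = phi j) -> eqat psi i = eqat phi i.
Proof.
move=> H; rewrite /eqat /BBL; apply: eq_bigr => k _; congr (_ *m _); apply: H.
  rewrite /pprime; lia.
have := ltn_ord k; rewrite /tau /pprime /qprime; lia.
Qed.

Lemma eqat_lin al psi phi i :
  eqat (fun j => al *: psi j + phi j) i = al *: eqat psi i + eqat phi i.
Proof.
rewrite /eqat /BBL scaler_sumr -big_split /=; apply: eq_bigr => k _.
by rewrite mulmxDr scalemxAr.
Qed.

Lemma eqat0 i : eqat (fun _ => 0) i = 0.
Proof. by rewrite /eqat /BBL big1 // => k _; rewrite mulmx0. Qed.

Lemma sum_ord_ifz (K : nat) (t : int) (F : 'cV[C]_d) :
  \sum_(k < K) (if k%:Z == t then F else 0) = if (0 <= t) && (t < K%:Z) then F else 0.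
Proof.
case: ifP => Ht.
  have Ht' : (absz t < K)%N by lia.
  rewrite (bigD1 (Ordinal Ht')) //.
  have -> : ((Ordinal Ht' : nat)%:Z == t) by apply/eqP; rewrite /=; lia.
  rewrite big1 => [|k Hk]; first by rewrite Monoid.mulm1.
  case: ifP => // /eqP Hkt; case/eqP: Hk.
  by apply: val_inj => /=; lia.
rewrite big1 // => k _; case: ifP => // /eqP Hkt; move: Ht; have := ltn_ord k; lia.
Qed.

Definition pm (s : int) (v : 'cV[C]_d) : dseq C d := fun j => if j == s then v else 0.

Lemma eqat_pm s v i : eqat (pm s v) i = a (s - i + P') *m v.
Proof.
rewrite /eqat /BBL /pm.
transitivity (\sum_(k < (absz (q - p)).+1)
   (if k%:Z == s - i + P' - p then a (s - i + P') *m v else 0)).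
  apply: eq_bigr => k _.
  case: ifP => /eqP H1; case: ifP => /eqP H2; try lia.
    by congr (_ *m _); congr a; lia.
  by rewrite mulmx0.
rewrite sum_ord_ifz; case: ifP => // H.
rewrite hout ?mul0mx //; apply/orP; lia.
Qed.

Lemma bulkP lo ro psi :
  bulk a p q lo ro psi <->
  inV lo ro psi /\ (forall i, in_rangeb lo (shiftE ro tau) i -> eqat psi i = 0).
Proof.
rewrite /bulk; split=> -[H1 H2]; split=> //.
  move=> i Hi; have := congr1 (fun f => f (i - P')) H2; rewrite /proj /=.
  rewrite /eqat; case: ifP => // /negbT Hn _; move: Hn Hi; clear H1 H2.
  case: lo => [l|]; case: ro => [r|] //=; rewrite /in_rangeb /tau /pprime /qprime; lia.
apply: functional_extensionality => j; rewrite /proj; case: ifP => // Hj.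
have := H2 (j + P'); rewrite /eqat addrK; apply; move: Hj; clear H1 H2; rewrite /in_rangeb.
by case: lo => [l|]; case: ro => [r|] //=; rewrite /tau /pprime /qprime; lia.
Qed.

End DS.

Section DS2.
Variables (C : numClosedFieldType) (d : nat) (a : int -> 'M[C]_d) (p q : int).
Hypothesis hpq : p <= q.
Hypothesis hout : forall r : int, (r < p) || (q < r) -> a r = 0.

Local Notation P' := (pprime p).
Local Notation Q' := (qprime q).
Local Notation tau := (tau p q).
Local Notation bulk := (bulk a p q).
Local Notation eqat := (eqat a p q).

Definition pr (l r : int) (psi : dseq C d) := proj (Some l) (Some r) psi.

Lemma prE l r psi j : pr l r psi j = if (l <= j) && (j <= r) then psi j else 0.
Proof. by []. Qed.

Lemma bulk0 lo ro : bulk lo ro (fun _ => 0).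
Proof. by apply/(bulkP a hpq); split=> // i _; rewrite eqat0. Qed.

Lemma bulk_lin lo ro al psi phi : bulk lo ro psi -> bulk lo ro phi ->
  bulk lo ro (fun j => al *: psi j + phi j).
Proof.
move=> /(bulkP a hpq) [H1 H2] /(bulkP a hpq) [H3 H4]; apply/(bulkP a hpq); split.
  by move=> j Hj; rewrite H1 // H3 // scaler0 addr0.
by move=> i Hi; rewrite eqat_lin H2 // H4 // scaler0 addr0.
Qed.

Lemma bulk_restr lo ro l r psi : bulk lo ro psi ->
  (forall j, l <= j -> j <= r -> in_rangeb lo ro j) ->
  bulk (Some l) (Some r) (pr l r psi).
Proof.
move=> /(bulkP a hpq) [H1 H2] Hin; apply/(bulkP a hpq); split.
  by move=> j /=; rewrite /pr /proj /= => /negbTE ->.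
move=> i /= Hi; rewrite -(H2 i); last first.
  have := Hin i; have := Hin (i + tau); move: Hi; rewrite /in_rangeb.
  have := tau_ge0 hpq.
  case: lo {H1 H2 Hin} => [l0|]; case: ro => [r0|] //=; rewrite /tau /pprime /qprime; lia.
apply: (eqat_local a hpq) => // j Hj1 Hj2; rewrite prE; case: ifP => //; move: Hi.
rewrite /in_rangeb; lia.
Qed.

Lemma bulk_shift l r s psi : bulk (Some l) (Some r) psi ->
  bulk (Some (l + s)) (Some (r + s)) (fun j => psi (j - s)).
Proof.
move=> /(bulkP a hpq) [H1 H2]; apply/(bulkP a hpq); split.
  move=> j Hj; apply: H1; move: Hj; rewrite /in_rangeb; lia.
move=> i Hi; rewrite -(H2 (i - s)); last by move: Hi; rewrite /in_rangeb /=; lia.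
rewrite /eqat /BBL; apply: eq_bigr => k _; congr (_ *m _); congr psi; lia.
Qed.

Lemma bulk_glue l L R r chi eta : l <= L -> R <= r -> tau <= R - L ->
  bulk (Some l) (Some R) chi -> bulk (Some L) (Some r) eta ->
  (forall j, L <= j -> j <= R -> chi j = eta j) ->
  bulk (Some l) (Some r) (fun j => if j <= R then chi j else eta j).
Proof.
move=> hl hr ht /(bulkP a hpq) [H1 H2] /(bulkP a hpq) [H3 H4] Heq; apply/(bulkP a hpq); split.
  move=> j; rewrite /in_rangeb => Hj; case: ifP => Hj2.
    by apply: H1; rewrite /in_rangeb; lia.
  by apply: H3; rewrite /in_rangeb; lia.
move=> i; rewrite /in_rangeb /= => Hi.
case: (boolP (i + tau <= R)) => HiR.
  rewrite -(H2 i); last by rewrite /in_rangeb /=; lia.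
  by apply: (eqat_local a hpq) => j Hj1 Hj2; have -> : j <= R by lia.
rewrite -(H4 i); last by rewrite /in_rangeb /=; lia.
apply: (eqat_local a hpq) => j Hj1 Hj2; case: ifP => // HjR; apply: Heq => //; lia.
Qed.

Lemma bulk_extR l L R r chi : R <= r -> tau <= R - L ->
  bulk (Some l) (Some R) chi -> (forall j, L <= j -> j <= R -> chi j = 0) ->
  bulk (Some l) (Some r) chi.
Proof.
move=> hr ht /(bulkP a hpq) [H1 H2] Hz; apply/(bulkP a hpq); split.
  move=> j; rewrite /in_rangeb => Hj; apply: H1; rewrite /in_rangeb; lia.
move=> i; rewrite /in_rangeb /= => Hi.
case: (boolP (i + tau <= R)) => HiR.
  by apply: H2; rewrite /in_rangeb /=; lia.
rewrite -(eqat0 a p q i); apply: (eqat_local a hpq) => j Hj1 Hj2.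
case: (boolP (j <= R)) => HjR; first by apply: Hz; lia.
by apply: H1; rewrite /in_rangeb; lia.
Qed.

Lemma bulk_extL l L R r eta : l <= L -> tau <= R - L ->
  bulk (Some L) (Some r) eta -> (forall j, L <= j -> j <= R -> eta j = 0) ->
  bulk (Some l) (Some r) eta.
Proof.
move=> hl ht /(bulkP a hpq) [H1 H2] Hz; apply/(bulkP a hpq); split.
  move=> j; rewrite /in_rangeb => Hj; apply: H1; rewrite /in_rangeb; lia.
move=> i; rewrite /in_rangeb /= => Hi.
case: (boolP (L <= i)) => HiL.
  by apply: H2; rewrite /in_rangeb /=; lia.
rewrite -(eqat0 a p q i); apply: (eqat_local a hpq) => j Hj1 Hj2.
case: (boolP (L <= j)) => HjL; first by apply: Hz; lia.
by apply: H1; rewrite /in_rangeb; lia.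
Qed.

End DS2.

Section DS3.
Variables (C : numClosedFieldType) (d : nat) (a : int -> 'M[C]_d) (p q : int).
Hypothesis hpq : p <= q.
Hypothesis hout : forall r : int, (r < p) || (q < r) -> a r = 0.

Local Notation tau := (tau p q).
Local Notation bulk := (bulk a p q).
Local Notation eqat := (eqat a p q).

Lemma bulk_eqw l1 l2 r1 r2 (psi : dseq C d) : l1 = l2 -> r1 = r2 ->
  bulk (Some l1) (Some r1) psi -> bulk (Some l2) (Some r2) psi.
Proof. by move=> -> ->. Qed.

Variables (L R : int) (k0 : nat).
Hypothesis hLR : tau <= R - L.

Hypothesis stab0 : forall chi, bulk (Some (L - k0%:Z)) (Some R) chi ->
  exists chi', bulk (Some (L - k0%:Z - 1)) (Some R) chi' /\
    (forall j, L <= j -> j <= R -> chi' j = chi j).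

Lemma stab_all l chi : bulk (Some (l - k0%:Z)) (Some (l + (R - L))) chi ->
  exists chi', bulk (Some (l - k0%:Z - 1)) (Some (l + (R - L))) chi' /\
    (forall j, l <= j -> j <= l + (R - L) -> chi' j = chi j).
Proof.
move=> H; have := bulk_shift hpq (- (l - L)) H.
move=> /(bulk_eqw (l2 := L - k0%:Z) (r2 := R)) H'.
have [||chi' [H1 H2]] := stab0 (H' _ _); try lia.
exists (fun j => chi' (j - (l - L))); split.
  by apply: (bulk_eqw _ _ (bulk_shift hpq (l - L) H1)); lia.
move=> j Hj1 Hj2; rewrite H2; try lia; congr chi; lia.
Qed.

Definition Inv (m : nat) (psi : dseq C d) :=
  bulk (Some (L - m%:Z)) (Some R) psi /\
  exists chi, bulk (Some (L - m%:Z - k0%:Z)) (Some (R - m%:Z)) chi /\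
    (forall j, L - m%:Z <= j -> j <= R - m%:Z -> chi j = psi j).

Lemma stepP m psi : Inv m psi ->
  exists psi', Inv m.+1 psi' /\ (forall j, L - m%:Z <= j -> psi' j = psi j).
Proof.
move=> [Hb [chi [Hc Hag]]]; have Ht := tau_ge0 hpq.
have Hc' : bulk (Some (L - m%:Z - k0%:Z)) (Some (L - m%:Z + (R - L))) chi.
  by apply: (bulk_eqw _ _ Hc); lia.
have [chi'' [Hc'' Hag'']] := stab_all Hc'.
pose psi' := fun j => if j == L - m%:Z - 1 then chi'' j else psi j.
have Hpsi'1 : forall j, L - m%:Z <= j -> psi' j = psi j.
  by move=> j Hj; rewrite /psi'; case: eqP => // ?; lia.
have Hpsi'2 : forall j, L - m%:Z - 1 <= j -> j <= R - m%:Z -> psi' j = chi'' j.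
  move=> j Hj1 Hj2; rewrite /psi'; case: eqP => // Hj3.
  have Hj4 : L - m%:Z <= j by lia.
  by rewrite -Hag // Hag'' //; lia.
exists psi'; split=> //; split.
  move: Hb => /(bulkP a hpq) [Hb1 Hb2]; apply/(bulkP a hpq); split.
    move=> j Hj; rewrite /psi'; case: eqP => [Hj2|_]; first by move: Hj; rewrite /in_rangeb; lia.
    by apply: Hb1; move: Hj; rewrite /in_rangeb; lia.
  move=> i; rewrite /in_rangeb /= => Hi.
  case: (boolP (L - m%:Z <= i)) => Hi2.
    rewrite -(Hb2 i); last by rewrite /in_rangeb /=; lia.
    by apply: (eqat_local a hpq) => j Hj1 Hj2; apply: Hpsi'1; lia.
  move: Hc'' => /(bulkP a hpq) [_ Hc2].
  rewrite -(Hc2 i); last by rewrite /in_rangeb /=; lia.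
  by apply: (eqat_local a hpq) => j Hj1 Hj2; apply: Hpsi'2; lia.
exists (pr (L - m.+1%:Z - k0%:Z) (R - m.+1%:Z) chi''); split.
  apply: (bulk_restr hpq Hc'') => j Hj1 Hj2; rewrite /in_rangeb; lia.
move=> j Hj1 Hj2; rewrite prE; case: ifP => H; last by lia.
by rewrite Hpsi'2 //; lia.
Qed.

Variable chi0 : dseq C d.
Hypothesis Hchi0 : bulk (Some (L - k0%:Z)) (Some R) chi0.

Lemma Inv0 : Inv 0 (pr L R chi0).
Proof.
split.
  apply: (bulk_eqw _ _ (bulk_restr hpq Hchi0 _)) => //; try lia.
  by move=> j Hj1 Hj2; rewrite /in_rangeb; lia.
exists chi0; split; first by apply: (bulk_eqw _ _ Hchi0); lia.
move=> j Hj1 Hj2; rewrite prE; case: ifP => //; lia.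
Qed.

Definition stepf m (x : {psi | Inv m psi}) :
  {psi' | Inv m.+1 psi' /\ (forall j, L - m%:Z <= j -> psi' j = proj1_sig x j)} :=
  constructive_indefinite_description _ (stepP (proj2_sig x)).

Fixpoint sq (m : nat) : {psi | Inv m psi} :=
  match m with
  | 0 => exist _ (pr L R chi0) Inv0
  | m'.+1 => let y := stepf (sq m') in exist _ (proj1_sig y) (proj1 (proj2_sig y))
  end.

Lemma sq_agree m m' j : (m <= m')%N -> L - m%:Z <= j ->
  proj1_sig (sq m') j = proj1_sig (sq m) j.
Proof.
move=> Hm Hj; elim: m' Hm => [|m' IH] Hm.
  by have -> : m = 0%N by lia.
case: (ltnP m m'.+1) => Hm2; last by have -> : m = m'.+1 by lia.
rewrite /= (proj2 (proj2_sig (stepf (sq m')))); last by lia.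
by apply: IH; lia.
Qed.

Definition phi_inf : dseq C d := fun j => proj1_sig (sq (absz (L - j))) j.

Lemma phi_infE m j : L - m%:Z <= j -> phi_inf j = proj1_sig (sq m) j.
Proof.
move=> Hj; rewrite /phi_inf.
have H1 : (absz (L - j) <= maxn m (absz (L - j)))%N by lia.
have H2 : (m <= maxn m (absz (L - j)))%N by lia.
rewrite -(@sq_agree _ _ j H1); last by lia.
by rewrite (@sq_agree _ _ j H2).
Qed.

Lemma phi_inf_bulk : bulk None (Some R) phi_inf.
Proof.
have Ht := tau_ge0 hpq.
apply/(bulkP a hpq); split.
  move=> j; rewrite /in_rangeb /= => Hj; rewrite (@phi_infE 0); last by lia.
  have := proj2_sig (sq 0) => -[/(bulkP a hpq) [H1 _] _].
  by apply: H1; rewrite /in_rangeb; lia.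
move=> i; rewrite /in_rangeb /= => Hi.
have := proj2_sig (sq (absz (L - i))) => -[/(bulkP a hpq) [_ H2] _].
rewrite -(H2 i); last by rewrite /in_rangeb /=; lia.
apply: (eqat_local a hpq) => j Hj1 Hj2; apply: phi_infE; lia.
Qed.

Lemma phi_inf_agree j : L <= j -> j <= R -> phi_inf j = chi0 j.
Proof.
move=> Hj1 Hj2; rewrite (@phi_infE 0) /=; last by lia.
by rewrite prE; case: ifP => //; lia.
Qed.

End DS3.

Section DS4.
Variables (C : numClosedFieldType) (d : nat) (a : int -> 'M[C]_d) (p q : int).
Hypothesis hpq : p <= q.
Hypothesis hout : forall r : int, (r < p) || (q < r) -> a r = 0.

Local Notation tau := (tau p q).
Local Notation bulk := (bulk a p q).
Local Notation eqat := (eqat a p q).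

Variables (L R : int) (k0 : nat).
Hypothesis hLR : tau <= R - L.

Hypothesis stab0 : forall chi, bulk (Some L) (Some (R + k0%:Z)) chi ->
  exists chi', bulk (Some L) (Some (R + k0%:Z + 1)) chi' /\
    (forall j, L <= j -> j <= R -> chi' j = chi j).

Lemma stab_allR l chi : bulk (Some l) (Some (l + (R - L) + k0%:Z)) chi ->
  exists chi', bulk (Some l) (Some (l + (R - L) + k0%:Z + 1)) chi' /\
    (forall j, l <= j -> j <= l + (R - L) -> chi' j = chi j).
Proof.
move=> H; have := bulk_shift hpq (- (l - L)) H.
move=> /(bulk_eqw (l2 := L) (r2 := R + k0%:Z)) H'.
have [||chi' [H1 H2]] := stab0 (H' _ _); try lia.
exists (fun j => chi' (j - (l - L))); split.
  by apply: (bulk_eqw _ _ (bulk_shift hpq (l - L) H1)); lia.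
move=> j Hj1 Hj2; rewrite H2; try lia; congr chi; lia.
Qed.

Definition InvR (m : nat) (psi : dseq C d) :=
  bulk (Some L) (Some (R + m%:Z)) psi /\
  exists chi, bulk (Some (L + m%:Z)) (Some (R + m%:Z + k0%:Z)) chi /\
    (forall j, L + m%:Z <= j -> j <= R + m%:Z -> chi j = psi j).

Lemma stepPR m psi : InvR m psi ->
  exists psi', InvR m.+1 psi' /\ (forall j, j <= R + m%:Z -> psi' j = psi j).
Proof.
move=> [Hb [chi [Hc Hag]]]; have Ht := tau_ge0 hpq.
have Hc' : bulk (Some (L + m%:Z)) (Some (L + m%:Z + (R - L) + k0%:Z)) chi.
  by apply: (bulk_eqw _ _ Hc); lia.
have [chi'' [Hc'' Hag'']] := stab_allR Hc'.
pose psi' := fun j => if j == R + m%:Z + 1 then chi'' j else psi j.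
have Hpsi'1 : forall j, j <= R + m%:Z -> psi' j = psi j.
  by move=> j Hj; rewrite /psi'; case: eqP => // ?; lia.
have Hpsi'2 : forall j, L + m%:Z <= j -> j <= R + m%:Z + 1 -> psi' j = chi'' j.
  move=> j Hj1 Hj2; rewrite /psi'; case: eqP => // Hj3.
  have Hj4 : j <= R + m%:Z by lia.
  by rewrite -Hag // Hag'' //; lia.
exists psi'; split=> //; split.
  move: Hb => /(bulkP a hpq) [Hb1 Hb2]; apply/(bulkP a hpq); split.
    move=> j Hj; rewrite /psi'; case: eqP => [Hj2|_]; first by move: Hj; rewrite /in_rangeb; lia.
    by apply: Hb1; move: Hj; rewrite /in_rangeb; lia.
  move=> i; rewrite /in_rangeb /= => Hi.
  case: (boolP (i + tau <= R + m%:Z)) => Hi2.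
    rewrite -(Hb2 i); last by rewrite /in_rangeb /=; lia.
    by apply: (eqat_local a hpq) => j Hj1 Hj2; apply: Hpsi'1; lia.
  move: Hc'' => /(bulkP a hpq) [_ Hc2].
  rewrite -(Hc2 i); last by rewrite /in_rangeb /=; lia.
  by apply: (eqat_local a hpq) => j Hj1 Hj2; apply: Hpsi'2; lia.
exists (pr (L + m.+1%:Z) (R + m.+1%:Z + k0%:Z) chi''); split.
  apply: (bulk_restr hpq Hc'') => j Hj1 Hj2; rewrite /in_rangeb; lia.
move=> j Hj1 Hj2; rewrite prE; case: ifP => H; last by lia.
by rewrite Hpsi'2 //; lia.
Qed.

Variable chi0 : dseq C d.
Hypothesis Hchi0 : bulk (Some L) (Some (R + k0%:Z)) chi0.

Lemma InvR0 : InvR 0 (pr L R chi0).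
Proof.
have Ht := tau_ge0 hpq.
split.
  apply: (bulk_eqw _ _ (bulk_restr hpq Hchi0 _)) => //; try lia.
  by move=> j Hj1 Hj2; rewrite /in_rangeb; lia.
exists chi0; split; first by apply: (bulk_eqw _ _ Hchi0); lia.
move=> j Hj1 Hj2; rewrite prE; case: ifP => //; lia.
Qed.

Definition stepfR m (x : {psi | InvR m psi}) :
  {psi' | InvR m.+1 psi' /\ (forall j, j <= R + m%:Z -> psi' j = proj1_sig x j)} :=
  constructive_indefinite_description _ (stepPR (proj2_sig x)).

Fixpoint sqR (m : nat) : {psi | InvR m psi} :=
  match m with
  | 0 => exist _ (pr L R chi0) InvR0
  | m'.+1 => let y := stepfR (sqR m') in exist _ (proj1_sig y) (proj1 (proj2_sig y))
  end.

Lemma sqR_agree m m' j : (m <= m')%N -> j <= R + m%:Z ->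
  proj1_sig (sqR m') j = proj1_sig (sqR m) j.
Proof.
move=> Hm Hj; elim: m' Hm => [|m' IH] Hm.
  by have -> : m = 0%N by lia.
case: (ltnP m m'.+1) => Hm2; last by have -> : m = m'.+1 by lia.
rewrite /= (proj2 (proj2_sig (stepfR (sqR m')))); last by lia.
by apply: IH; lia.
Qed.

Definition phi_infR : dseq C d := fun j => proj1_sig (sqR (absz (j - R))) j.

Lemma phi_infRE m j : j <= R + m%:Z -> phi_infR j = proj1_sig (sqR m) j.
Proof.
move=> Hj; rewrite /phi_infR.
have H1 : (absz (j - R) <= maxn m (absz (j - R)))%N by lia.
have H2 : (m <= maxn m (absz (j - R)))%N by lia.
rewrite -(@sqR_agree _ _ j H1); last by lia.
by rewrite (@sqR_agree _ _ j H2).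
Qed.

Lemma phi_infR_bulk : bulk (Some L) None phi_infR.
Proof.
have Ht := tau_ge0 hpq.
apply/(bulkP a hpq); split.
  move=> j; rewrite /in_rangeb /= => Hj; rewrite (@phi_infRE 0); last by lia.
  have := proj2_sig (sqR 0) => -[/(bulkP a hpq) [H1 _] _].
  by apply: H1; rewrite /in_rangeb; lia.
move=> i; rewrite /in_rangeb /= => Hi.
have := proj2_sig (sqR (absz ((i + tau - R)%R))) => -[/(bulkP a hpq) [_ H2] _].
rewrite -(H2 i); last by rewrite /in_rangeb /=; lia.
apply: (eqat_local a hpq) => j Hj1 Hj2; apply: phi_infRE; lia.
Qed.

Lemma phi_infR_agree j : L <= j -> j <= R -> phi_infR j = chi0 j.
Proof.
move=> Hj1 Hj2; rewrite (@phi_infRE 0) /=; last by lia.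
by rewrite prE; case: ifP => //; lia.
Qed.

End DS4.

Section Mxof.
Variable F : fieldType.

Definition mxof m n (f : 'rV[F]_m -> 'rV[F]_n) : 'M[F]_(m, n) :=
  \matrix_(i, j) f (delta_mx 0 i) 0 j.

Lemma mxofE m n (f : 'rV[F]_m -> 'rV[F]_n) :
  (forall al u v, f (al *: u + v) = al *: f u + f v) ->
  forall u, u *m mxof f = f u.
Proof.
move=> Hf u.
have f0 : f 0 = 0.
  have := Hf 1 0 0; rewrite !scale1r addr0 => /(congr1 (fun x => x - f 0)).
  by rewrite subrr addrK => <-.
have fD : forall x y, f (x + y) = f x + f y by move=> x y; have := Hf 1 x y; rewrite !scale1r.
have fZ : forall al x, f (al *: x) = al *: f x by move=> al x; have := Hf al x 0; rewrite !addr0 f0 addr0.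
rewrite mulmx_sum_row {2}(row_sum_delta u).
rewrite (big_morph f fD f0); apply: eq_bigr => i _; rewrite fZ; congr (_ *: _).
by apply/rowP => j; rewrite !mxE.
Qed.

Lemma row_freeP' m n (M : 'M[F]_(m, n)) :
  (forall x : 'rV_m, x *m M = 0 -> x = 0) -> row_free M.
Proof.
move=> H; rewrite -kermx_eq0; apply/eqP/row_matrixP => i.
by rewrite row0; apply: H; rewrite -row_mul mulmx_ker row0.
Qed.

Lemma submxMP m1 m2 n k (u : 'M[F]_(m1, n)) (A : 'M[F]_(m2, k)) (B : 'M[F]_(k, n)) :
  (u <= A *m B)%MS -> exists v : 'M_(m1, k), (v <= A)%MS /\ u = v *m B.
Proof.
move=> /submxP [D ->]; exists (D *m A); split; first exact: submxMl.
by rewrite mulmxA.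
Qed.

End Mxof.

Section Enc.
Variables (C : numClosedFieldType) (d : nat).

Definition flin (G : dseq C d -> dseq C d) :=
  forall al psi phi, G (fun j => al *: psi j + phi j) = (fun j => al *: G psi j + G phi j).

Definition inw (b : int) (n : nat) (j : int) := (b <= j) && (j <= b + n%:Z).

Definition enc (b : int) (n : nat) (psi : dseq C d) : 'rV[C]_(n.+1 * d) :=
  mxvec (\matrix_(i < n.+1, c < d) psi (b + i%:Z) c ord0).

Definition dec (b : int) (n : nat) (u : 'rV[C]_(n.+1 * d)) : dseq C d :=
  fun j => if inw b n j then \col_c (vec_mx u) (inord (absz (j - b))) c else 0.

Arguments dec b n u j : clear implicits.
Arguments enc b n psi : clear implicits.

Lemma dec_out b n u j : ~~ inw b n j -> dec b n u j = 0.
Proof. by rewrite /dec => /negbTE ->. Qed.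

Lemma dec_encE b n psi j : inw b n j -> dec b n (enc b n psi) j = psi j.
Proof.
rewrite /dec /enc => Hj; rewrite Hj mxvecK; apply/matrixP => c z.
rewrite !mxE (ord1 z) inordK /=; last by move: Hj; rewrite /inw; lia.
by congr (psi _ c _); move: Hj; rewrite /inw; lia.
Qed.

Lemma dec_enc b n psi : (forall j, ~~ inw b n j -> psi j = 0) -> dec b n (enc b n psi) = psi.
Proof.
move=> H; apply: functional_extensionality => j; case: (boolP (inw b n j)) => Hj.
  exact: dec_encE.
by rewrite dec_out // H.
Qed.

Lemma enc_dec b n u : enc b n (dec b n u) = u.
Proof.
rewrite /enc -[RHS]vec_mxK; congr mxvec; apply/matrixP => i c.
rewrite mxE /dec.
have -> : inw b n (b + i%:Z) by rewrite /inw; have := ltn_ord i; lia.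
rewrite mxE; congr (vec_mx u _ _); apply: val_inj => /=; have Hi := ltn_ord i; rewrite inordK; lia.
Qed.

Lemma enc_ext b n psi phi : (forall j, inw b n j -> psi j = phi j) -> enc b n psi = enc b n phi.
Proof.
move=> H; rewrite /enc; congr mxvec; apply/matrixP => i c; rewrite !mxE H //.
by rewrite /inw; have := ltn_ord i; lia.
Qed.

Lemma enc_lin b n al psi phi :
  enc b n (fun j => al *: psi j + phi j) = al *: enc b n psi + enc b n phi.
Proof.
rewrite /enc -linearP; congr mxvec; apply/matrixP => i c; rewrite !mxE.
by [].
Qed.

Lemma dec_lin b n al u v :
  dec b n (al *: u + v) = (fun j => al *: dec b n u j + dec b n v j).
Proof.
apply: functional_extensionality => j; rewrite /dec; case: ifP => _; last by rewrite scaler0 addr0.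
have -> : vec_mx (al *: u + v) = al *: vec_mx u + vec_mx v :> 'M_(n.+1, d) by rewrite linearP.
by apply/matrixP => c z; rewrite !mxE.
Qed.

Lemma enc0 b n : enc b n (fun _ => 0) = 0.
Proof. by rewrite /enc; apply/rowP => e; case/mxvec_indexP: e => i c; rewrite mxvecE !mxE. Qed.

Definition opmx b n b' n' (G : dseq C d -> dseq C d) :=
  mxof (fun u : 'rV[C]_(n.+1 * d) => enc b' n' (G (dec b n u))).

Lemma opmxE b n b' n' G : flin G ->
  forall u, u *m opmx b n b' n' G = enc b' n' (G (dec b n u)).
Proof.
move=> HG u; apply: mxofE => al x y.
by rewrite dec_lin HG enc_lin.
Qed.

End Enc.
Arguments dec {C d} b n u j.
Arguments enc {C d} b n psi.
Arguments opmx {C d} b n b' n' G.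

Lemma sum_mxvec (V : nmodType) m n (F : 'I_(m * n) -> V) :
  \sum_(o < m * n) F o = \sum_(i < m) \sum_(j < n) F (mxvec_index i j).
Proof.
rewrite pair_big /= (reindex (uncurry (@mxvec_index m n))) /=.
  by apply: eq_bigr => -[i j].
exact: curry_mxvec_bij.
Qed.

Lemma sum_ifk (V : nmodType) (K : nat) (t : int) (G : int -> V) :
  \sum_(k < K) (if k%:Z == t then G k%:Z else 0) = if (0 <= t) && (t < K%:Z) then G t else 0.
Proof.
case: ifP => Ht.
  have Ht' : (absz t < K)%N by lia.
  rewrite (bigD1 (Ordinal Ht')) //.
  have -> : ((Ordinal Ht' : nat)%:Z == t) by apply/eqP; rewrite /=; lia.
  rewrite big1 => [|k Hk]; first by rewrite Monoid.mulm1 /=; congr G; lia.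
  case: ifP => // /eqP Hkt; case/eqP: Hk.
  by apply: val_inj => /=; lia.
rewrite big1 // => k _; case: ifP => // /eqP Hkt; move: Ht; have := ltn_ord k; lia.
Qed.

Section Rank.
Variables (C : numClosedFieldType) (d : nat) (a : int -> 'M[C]_d) (p q : int).
Hypothesis hpq : p <= q.
Hypothesis hout : forall r : int, (r < p) || (q < r) -> a r = 0.
Hypothesis hreg : regular a p q.

Local Notation P' := (pprime p).
Local Notation Q' := (qprime q).
Local Notation tau := (tau p q).
Local Notation tn := (absz (Defs.tau p q)).

Definition eqop (psi : dseq C d) : dseq C d := fun i => eqat a p q psi i.

Lemma eqop_lin : flin eqop.
Proof.
move=> al psi phi; apply: functional_extensionality => i; exact: eqat_lin.
Qed.

Lemma dec_delta b n (i : 'I_n.+1) (c : 'I_d) :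
  dec b n (delta_mx 0 (mxvec_index i c)) = pm (b + i%:Z) (delta_mx c 0 : 'cV[C]_d).
Proof.
apply: functional_extensionality => j; rewrite /dec /pm.
case: ifP => Hj.
  have Hjw : (b <= j) && (j <= b + n%:Z) by exact: Hj.
  rewrite vec_mx_delta; case: eqP => Hj2.
    apply/matrixP => c' z; rewrite !mxE (ord1 z) /=.
    have -> : (inord (absz (j - b)) == i) by apply/eqP/val_inj; rewrite /= inordK; lia.
    by rewrite andbT.
  apply/matrixP => c' z; rewrite !mxE.
  have -> : (inord (absz (j - b)) == i) = false.
    apply/negbTE/eqP => Hi; apply: Hj2; rewrite -Hi /= inordK; move: Hj; rewrite /inw; lia.
  by [].
case: eqP => // Hj2; move: Hj; rewrite /inw; have := ltn_ord i; lia.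
Qed.

Lemma eqatmx_entry l m (i : 'I_(m + tn).+1) (c : 'I_d) (i' : 'I_m.+1) (c' : 'I_d) :
  (opmx l (m + tn) l m eqop) (mxvec_index i c) (mxvec_index i' c') =
  a (i%:Z - i'%:Z + P') c' c.
Proof.
have -> : (opmx l (m + tn) l m eqop) (mxvec_index i c) (mxvec_index i' c') =
   ((delta_mx 0 (mxvec_index i c) : 'rV[C]_((m + tn).+1 * d)) *m opmx l (m + tn) l m eqop) 0 (mxvec_index i' c').
  by rewrite -rowE !mxE.
rewrite opmxE; last exact: eqop_lin.
rewrite dec_delta /enc mxvecE mxE /eqop eqat_pm // mxE.
rewrite (bigD1 c) //= mxE eqxx mulr1 big1 ?addr0; last first.
  by move=> k /negbTE Hk; rewrite mxE Hk mulr0.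
by congr (a _ _ _); lia.
Qed.

Lemma poly_zero m (x : 'I_m.+1 -> 'I_d -> C) :
  (forall (i : 'I_(m + tn).+1) (c : 'I_d),
     \sum_(i' < m.+1) \sum_(c' < d) x i' c' * a (i%:Z - i'%:Z + P') c' c = 0) ->
  forall i' c', x i' c' = 0.
Proof.
move=> H.
pose Xp : 'rV[{poly C}]_d := \row_c' \sum_(i' < m.+1) (x i' c')%:P * 'X^i'.
pose Pm := shifted_symbol a p q.
have HXP : Xp *m Pm = 0.
  apply/rowP => c; rewrite !mxE; apply/polyP => s; rewrite coef0 coef_sum.
  have E1 : forall c' : 'I_d, (Xp 0 c' * Pm c' c)`_s =
      \sum_(i' < m.+1) x i' c' * a (p + s%:Z - i'%:Z) c' c.
    move=> c'; rewrite !mxE big_distrl coef_sum; apply: eq_bigr => i' _.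
    rewrite big_distrr coef_sum.
    transitivity (\sum_(k < (absz (q - p)).+1)
        x i' c' * (if k%:Z == s%:Z - i'%:Z then (a (p + k%:Z)) c' c else 0)).
      apply: eq_bigr => k _.
      change (((x i' c')%:P * 'X^i' * (((a (p + k%:Z)) c' c)%:P * 'X^k))`_s =
        x i' c' * (if k%:Z == s%:Z - i'%:Z then (a (p + k%:Z)) c' c else 0)).
      have -> : (x i' c')%:P * 'X^i' * (((a (p + k%:Z)) c' c)%:P * 'X^k) =
                (x i' c' * (a (p + k%:Z)) c' c)%:P * 'X^(i' + k).
        by rewrite polyCM exprD; ring.
      rewrite coefCM coefXn; case: eqP => Hs; case: eqP => Hk; try lia.
        by rewrite mulr1.
      by rewrite !mulr0.
    rewrite -mulr_sumr (sum_ifk _ _ (fun t => (a (p + t)) c' c)).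
    case: ifP => Ht; first by congr (_ * a _ _ _); lia.
    rewrite hout ?mxE ?mulr0 //; apply/orP; move: Ht; lia.
  rewrite (eq_bigr _ (fun c' _ => E1 c')) exchange_big /=.
  case: (boolP (s%:Z + (p - P') <= (m + tn)%:Z)) => Hs.
    have Hs' : (absz ((s%:Z + (p - P'))%R) < (m + tn).+1)%N by move: Hs; rewrite /pprime; lia.
    rewrite -[RHS](H (Ordinal Hs') c); apply: eq_bigr => i' _; apply: eq_bigr => c' _.
    by congr (_ * a _ _ _); rewrite /= /pprime; lia.
  rewrite big1 // => i' _; rewrite big1 // => c' _.
  rewrite hout ?mxE ?mulr0 //; apply/orP; right; move: Hs; have := ltn_ord i'.
  rewrite /tau /pprime /qprime; lia.
have HX : Xp = 0.
  have : Xp *m Pm *m \adj Pm = 0 by rewrite HXP mul0mx.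
  rewrite -mulmxA mul_mx_adj mul_mx_scalar => /rowP Hr.
  apply/rowP => c'; have := Hr c'; rewrite !mxE => /eqP; rewrite mulf_eq0.
  by case/orP => [/eqP Hd|/eqP //]; move: hreg; rewrite /regular Hd eqxx.
move=> i' c'; have := congr1 (fun r : 'rV[{poly C}]_d => (r 0 c')`_i') HX.
rewrite !mxE coef0 coef_sum => <-.
rewrite (bigD1 i') //= coefCM coefXn eqxx mulr1 big1 ?addr0 // => j Hj.
by rewrite coefCM coefXn; case: eqP => [/val_inj E|]; [rewrite E eqxx in Hj| rewrite mulr0].
Qed.

Lemma rank_eqmx l m : \rank (opmx l (m + tn) l m eqop) = (m.+1 * d)%N.
Proof.
rewrite -mxrank_tr; apply/eqP; rewrite -/(row_free _); apply: row_freeP' => x Hx.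
apply/rowP => o; case/mxvec_indexP: o => i' c'; rewrite mxE.
apply: (@poly_zero m (fun i' c' => x 0 (mxvec_index i' c'))) => i c.
have := congr1 (fun r : 'rV[C]_((m + tn).+1 * d) => r 0 (mxvec_index i c)) Hx; rewrite !mxE sum_mxvec => HH; rewrite -[RHS]HH.
apply: eq_bigr => j _; apply: eq_bigr => k _; rewrite mxE eqatmx_entry mulrC.
by [].
Qed.

Lemma rank_kereq l m : \rank (kermx (opmx l (m + tn) l m eqop)) = (tn * d)%N.
Proof. by rewrite mxrank_ker rank_eqmx; lia. Qed.

End Rank.

Lemma rows_sub (F : fieldType) m1 m2 N (A : 'M[F]_(m1, N)) (B : 'M[F]_(m2, N)) :
  (forall u : 'rV_N, (u <= A)%MS -> (u <= B)%MS) -> (A <= B)%MS.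
Proof. by move=> H; apply/row_subP => i; apply: H; exact: row_sub. Qed.

Lemma rows_subM (F : fieldType) m1 m2 N N' (A : 'M[F]_(m1, N)) (M : 'M[F]_(N, N'))
  (B : 'M[F]_(m2, N')) :
  (forall u : 'rV_N, (u <= A)%MS -> (u *m M <= B)%MS) -> (A *m M <= B)%MS.
Proof. by move=> H; apply/row_subP => i; rewrite row_mul; apply: H; exact: row_sub. Qed.

Lemma idf_lin (C : numClosedFieldType) d : flin (fun psi : dseq C d => psi).
Proof. by []. Qed.

Lemma pr_lin (C : numClosedFieldType) d l r : flin (@pr C d l r).
Proof.
move=> al psi phi; apply: functional_extensionality => j; rewrite !prE.
by case: ifP => //; rewrite scaler0 addr0.
Qed.

Lemma dec0 (C : numClosedFieldType) d b n : dec b n (0 : 'rV[C]_(n.+1 * d)) = (fun _ => 0).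
Proof.
by rewrite /dec; apply: functional_extensionality => j; case: ifP => //; rewrite linear0 => _; apply/matrixP => c z; rewrite !mxE.
Qed.

Section Amb.
Variables (C : numClosedFieldType) (d : nat) (a : int -> 'M[C]_d) (p q : int).
Hypothesis hpq : p <= q.
Hypothesis hout : forall r : int, (r < p) || (q < r) -> a r = 0.
Hypothesis hreg : regular a p q.

Local Notation tau := (Defs.tau p q).
Local Notation tn := (absz (Defs.tau p q)).
Local Notation bulk := (bulk a p q).

Variables (bW : int) (nW : nat).
Local Notation dW := (dec bW nW).
Local Notation eW := (enc bW nW).

Definition SPW (l : int) (m : nat) :=
  kermx (opmx l (m + tn) l m (@eqop C d a p q)) *m opmx l (m + tn) bW nW (fun psi => psi).

Lemma tn_eq : tn%:Z = tau.
Proof. have := tau_ge0 hpq; lia. Qed.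

Lemma memSP l m u : bW <= l -> l + (m + tn)%:Z <= bW + nW%:Z ->
  (u <= SPW l m)%MS <-> bulk (Some l) (Some (l + (m + tn)%:Z)) (dW u).
Proof.
move=> Hl Hr; have Ht := tn_eq; split.
  move=> /submxMP [v [Hv ->]]; rewrite opmxE; last exact: idf_lin.
  rewrite dec_enc; last first.
    by move=> j Hj; rewrite dec_out //; move: Hj; rewrite /inw; lia.
  move/sub_kermxP: Hv; rewrite opmxE; last exact: eqop_lin.
  move=> Hv; apply/(bulkP a hpq); split.
    by move=> j; rewrite /in_rangeb /= => Hj; rewrite dec_out // /inw.
  move=> i; rewrite /in_rangeb /= => Hi.
  have := congr1 (fun w => dec l m w i) Hv; rewrite dec_encE; last by rewrite /inw; lia.
  by rewrite /eqop => ->; rewrite dec0.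
move=> Hb; have Hb' := Hb; move/(bulkP a hpq): Hb' => [Hs He].
have Hdec : dec l (m + tn) (enc l (m + tn) (dW u)) = dW u.
  apply: dec_enc => j Hj; apply: Hs; move: Hj; rewrite /inw /in_rangeb; lia.
have -> : u = enc l (m + tn) (dW u) *m opmx l (m + tn) bW nW (fun psi => psi).
  by rewrite opmxE ?Hdec ?enc_dec //; exact: idf_lin.
apply: submxMr; apply/sub_kermxP; rewrite opmxE; last exact: eqop_lin.
rewrite Hdec -(enc0 C d l m); apply: enc_ext => j; rewrite /inw => Hj.
by rewrite /eqop He // /in_rangeb /=; lia.
Qed.

Lemma memSP' l m psi : bW <= l -> l + (m + tn)%:Z <= bW + nW%:Z ->
  bulk (Some l) (Some (l + (m + tn)%:Z)) psi -> (eW psi <= SPW l m)%MS.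
Proof.
move=> Hl Hr Hb; apply/memSP => //; rewrite dec_enc //.
move=> j Hj; move/(bulkP a hpq): Hb => [Hs _]; apply: Hs; move: Hj.
by rewrite /inw /in_rangeb; lia.
Qed.

Lemma rank_SPW l m : bW <= l -> l + (m + tn)%:Z <= bW + nW%:Z ->
  \rank (SPW l m) = (tn * d)%N.
Proof.
move=> Hl Hr; rewrite /SPW mxrankMfree ?rank_kereq //.
apply: row_freeP' => x; rewrite opmxE; last exact: idf_lin.
move=> Hx; rewrite -[x](enc_dec l) -(enc0 C d l (m + tn)); apply: enc_ext => j Hj.
have := congr1 (fun w => dW w j) Hx; rewrite dec_encE; last by move: Hj; rewrite /inw; lia.
by move=> ->; rewrite dec0.
Qed.

Definition rho (L R : int) := opmx bW nW bW nW (@pr C d L R).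

Lemma rhoE L R u : u *m rho L R = eW (pr L R (dW u)).
Proof. by rewrite opmxE //; exact: pr_lin. Qed.

Lemma dW_enc_pr L R (psi : dseq C d) : bW <= L -> R <= bW + nW%:Z -> dW (eW (pr L R psi)) = pr L R psi.
Proof.
move=> HL HR; apply: dec_enc => j Hj; rewrite prE; case: ifP => //; move: Hj; rewrite /inw; lia.
Qed.

Lemma dW0 : dW (0 : 'rV[C]_(nW.+1 * d)) = (fun _ => 0).
Proof. exact: dec0. Qed.

Lemma memker L R u : bW <= L -> R <= bW + nW%:Z ->
  (u <= kermx (rho L R))%MS <-> (forall j, L <= j -> j <= R -> dW u j = 0).
Proof.
move=> HL HR; split.
  move/sub_kermxP; rewrite rhoE => /(congr1 dW); rewrite dW_enc_pr // dW0 => H j Hj1 Hj2.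
  by have := congr1 (fun f => f j) H; rewrite prE /=; case: ifP => //; lia.
move=> H; apply/sub_kermxP; rewrite rhoE -(enc0 C d bW nW); apply: enc_ext => j _.
by rewrite prE; case: ifP => // /andP [Hj1 Hj2]; apply: H.
Qed.

End Amb.

Lemma chain_stab (F : fieldType) n (r : nat -> nat) (U : forall k, 'M[F]_(r k, n)) T K :
  (T < K)%N -> (forall k, (k.+1 <= K)%N -> (U k.+1 <= U k)%MS) -> (\rank (U 0%N) <= T)%N ->
  exists k0, (k0 <= T)%N /\ (U k0 <= U k0.+1)%MS.
Proof.
move=> HTK Hdec H0.
case: (boolP [exists k : 'I_T.+1, (U k <= U k.+1)%MS]) => [/existsP [k Hk]|/existsPn Hn].
  by exists k; split => //; have := ltn_ord k; lia.
have Hind : forall k, (k <= T.+1)%N -> (\rank (U k) + k <= \rank (U 0%N))%N.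
  elim => [|k IH] Hk; first by rewrite addn0.
  have Hk' : (k < T.+1)%N by lia.
  have := Hn (Ordinal Hk') => /= Hnot.
  have [Hle Heq] := mxrank_leqif_sup (Hdec k (ltac:(lia))).
  have : (\rank (U k.+1) != \rank (U k))%N by rewrite Heq.
  move: (IH (ltac:(lia))) Hle; lia.
by have := Hind T.+1 (leqnn _); lia.
Qed.

Section Count.
Variables (C : numClosedFieldType) (d : nat) (a : int -> 'M[C]_d) (p q : int).
Hypothesis hpq : p <= q.
Hypothesis hout : forall r : int, (r < p) || (q < r) -> a r = 0.
Hypothesis hreg : regular a p q.

Local Notation tau := (Defs.tau p q).
Local Notation tn := (absz (Defs.tau p q)).
Local Notation bulk := (bulk a p q).

Variables (L R : int) (K : nat).
Hypothesis hLR : tau <= R - L.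

Definition M0 := absz ((R - L - tau)%R).
Definition bW := L - K%:Z.
Definition nW := (M0 + tn + K + K)%N.
Local Notation dW := (dec bW nW).
Local Notation eW := (enc bW nW).
Local Notation SP := (SPW a p q bW nW).
Local Notation rh := (rho C d bW nW L R).

Lemma Req : R = L + (M0 + tn)%:Z.
Proof. have := tau_ge0 hpq; rewrite /M0; lia. Qed.

Lemma bWnW : bW + nW%:Z = R + K%:Z.
Proof. have := Req; rewrite /bW /nW; lia. Qed.

Definition S1 (k : nat) := SP (L - k%:Z) (M0 + k).
Definition S2 (k : nat) := SP L (M0 + k).
Definition G (k : nat) := SP (L - k%:Z) (M0 + k + k).
Definition S0 := SP L M0.

Lemma mem1 k u : (k <= K)%N -> (u <= S1 k)%MS <-> bulk (Some (L - k%:Z)) (Some R) (dW u).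
Proof.
move=> Hk; have := Req; have := bWnW; move=> H1 H2.
have Hl : bW <= (L - k%:Z) by rewrite /bW; lia.
have Hr : (L - k%:Z) + ((M0 + k) + tn)%:Z <= bW + nW%:Z by lia.
rewrite /S1 (memSP a hpq u Hl Hr).
by split; apply: bulk_eqw; lia.
Qed.

Lemma mem2 k u : (k <= K)%N -> (u <= S2 k)%MS <-> bulk (Some L) (Some (R + k%:Z)) (dW u).
Proof.
move=> Hk; have := Req; have := bWnW; move=> H1 H2.
have Hl : bW <= L by rewrite /bW; lia.
have Hr : L + ((M0 + k) + tn)%:Z <= bW + nW%:Z by lia.
rewrite /S2 (memSP a hpq u Hl Hr).
by split; apply: bulk_eqw; lia.
Qed.

Lemma memG k u : (k <= K)%N -> (u <= G k)%MS <-> bulk (Some (L - k%:Z)) (Some (R + k%:Z)) (dW u).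
Proof.
move=> Hk; have := Req; have := bWnW; move=> H1 H2.
have Hl : bW <= (L - k%:Z) by rewrite /bW; lia.
have Hr : (L - k%:Z) + ((M0 + k + k) + tn)%:Z <= bW + nW%:Z by lia.
rewrite /G (memSP a hpq u Hl Hr).
by split; apply: bulk_eqw; lia.
Qed.

Lemma mem0 u : (u <= S0)%MS <-> bulk (Some L) (Some R) (dW u).
Proof.
have := Req; have := bWnW; move=> H1 H2.
have Hl : bW <= L by rewrite /bW; lia.
have Hr : L + (M0 + tn)%:Z <= bW + nW%:Z by lia.
rewrite /S0 (memSP a hpq u Hl Hr).
by split; apply: bulk_eqw; lia.
Qed.

Lemma dW_eW (psi : dseq C d) lo ro : bulk lo ro psi ->
  (forall j, in_rangeb lo ro j -> inw bW nW j) -> dW (eW psi) = psi.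
Proof.
move=> /(bulkP a hpq) [Hs _] H; apply: dec_enc => j Hj.
by apply: Hs; apply: contra Hj; apply: H.
Qed.

Lemma inWtac k j lo ro : (k <= K)%N -> lo = Some (L - k%:Z) \/ lo = Some L ->
  ro = Some R \/ ro = Some (R + k%:Z) -> in_rangeb lo ro j -> inw bW nW j.
Proof.
move=> Hk Hlo Hro; have := bWnW; rewrite /inw /bW => H1.
by case: Hlo => ->; case: Hro => -> /=; rewrite /in_rangeb; lia.
Qed.

Lemma rhoE' u : u *m rh = eW (pr L R (dW u)).
Proof. exact: rhoE. Qed.

Lemma dW_pr (psi : dseq C d) : dW (eW (pr L R psi)) = pr L R psi.
Proof. by apply: (dW_enc_pr hpq); have := bWnW; have := Req; rewrite /bW; lia. Qed.

Lemma memK u : (u <= kermx rh)%MS <-> (forall j, L <= j -> j <= R -> dW u j = 0).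
Proof. by apply: (memker hpq); have := bWnW; have := Req; rewrite /bW; lia. Qed.

Lemma f1 k : (k <= K)%N -> (S1 k *m rh <= S0)%MS /\ (S2 k *m rh <= S0)%MS.
Proof.
move=> Hk; have Ht := tau_ge0 hpq; split; apply: rows_subM => u.
  move/mem1 => /(_ Hk) Hb; apply/mem0; rewrite rhoE' dW_pr.
  apply: (bulk_restr hpq Hb) => j Hj1 Hj2; rewrite /in_rangeb; lia.
move/mem2 => /(_ Hk) Hb; apply/mem0; rewrite rhoE' dW_pr.
apply: (bulk_restr hpq Hb) => j Hj1 Hj2; rewrite /in_rangeb; lia.
Qed.


Lemma pr_ext (psi phi : dseq C d) : (forall j, L <= j -> j <= R -> psi j = phi j) ->
  pr L R psi = pr L R phi.
Proof.
move=> H; apply: functional_extensionality => j; rewrite !prE.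
by case: ifP => // /andP [H1 H2]; apply: H.
Qed.

Lemma inW1 k j : (k <= K)%N -> in_rangeb (Some (L - k%:Z)) (Some R) j -> inw bW nW j.
Proof. by move=> Hk; apply: (inWtac Hk); [left|left]. Qed.
Lemma inW2 k j : (k <= K)%N -> in_rangeb (Some L) (Some (R + k%:Z)) j -> inw bW nW j.
Proof. by move=> Hk; apply: (inWtac Hk); [right|right]. Qed.
Lemma inWG k j : (k <= K)%N -> in_rangeb (Some (L - k%:Z)) (Some (R + k%:Z)) j -> inw bW nW j.
Proof. by move=> Hk; apply: (inWtac Hk); [left|right]. Qed.
Lemma inW0 j : in_rangeb (Some L) (Some R) j -> inw bW nW j.
Proof. by apply: (@inWtac 0); [|right|left]; rewrite ?subr0. Qed.

Lemma eq_of_rho (psi phi : dseq C d) : eW (pr L R psi) = eW (pr L R phi) ->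
  forall j, L <= j -> j <= R -> psi j = phi j.
Proof.
move=> /(congr1 dW); rewrite !dW_pr => H j Hj1 Hj2.
by have := congr1 (fun f => f j) H; rewrite !prE; case: ifP => //; lia.
Qed.

Section WithK.
Variable k : nat.
Hypothesis Hk : (k <= K)%N.

Lemma f2a : (S1 k *m rh :&: S2 k *m rh <= G k *m rh)%MS.
Proof.
have Ht := tau_ge0 hpq.
apply: rows_sub => u; rewrite sub_capmx => /andP [H1 H2].
case/submxMP: H1 => v1 [Hv1 E1]; case/submxMP: H2 => v2 [Hv2 E2].
move/(mem1 _ Hk): Hv1 => B1; move/(mem2 _ Hk): Hv2 => B2.
have Hag : forall j, L <= j -> j <= R -> dW v1 j = dW v2 j.
  by apply: eq_of_rho; rewrite -!rhoE' -E1 -E2.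
have Bz := bulk_glue hpq (ltac:(lia) : L - k%:Z <= L) (ltac:(lia) : R <= R + k%:Z) hLR B1 B2 Hag.
set z := (fun j => if j <= R then dW v1 j else dW v2 j) in Bz.
have Hz : dW (eW z) = z by apply: (dW_eW Bz) => j; apply: inWG.
have -> : u = eW z *m rh.
  rewrite E1 !rhoE' Hz; congr eW; apply: pr_ext => j Hj1 Hj2; by rewrite /z Hj2.
by apply: submxMr; apply/(memG _ Hk); rewrite Hz.
Qed.

Lemma f2b : (G k *m rh <= S1 k *m rh :&: S2 k *m rh)%MS.
Proof.
have Ht := tau_ge0 hpq.
apply: rows_subM => w /(memG _ Hk) Bz; rewrite sub_capmx; apply/andP; split.
  have B1 := bulk_restr hpq (l := L - k%:Z) (r := R) Bz (fun j Hj1 Hj2 => ltac:(rewrite /in_rangeb; lia)).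
  have Hz : dW (eW (pr (L - k%:Z) R (dW w))) = pr (L - k%:Z) R (dW w).
    by apply: (dW_eW B1) => j; apply: inW1.
  have -> : w *m rh = eW (pr (L - k%:Z) R (dW w)) *m rh.
    rewrite !rhoE' Hz; congr eW; apply: pr_ext => j Hj1 Hj2; rewrite prE; case: ifP => //; lia.
  by apply: submxMr; apply/(mem1 _ Hk); rewrite Hz.
have B2 := bulk_restr hpq (l := L) (r := R + k%:Z) Bz (fun j Hj1 Hj2 => ltac:(rewrite /in_rangeb; lia)).
have Hz : dW (eW (pr L (R + k%:Z) (dW w))) = pr L (R + k%:Z) (dW w).
  by apply: (dW_eW B2) => j; apply: inW2.
have -> : w *m rh = eW (pr L (R + k%:Z) (dW w)) *m rh.
  rewrite !rhoE' Hz; congr eW; apply: pr_ext => j Hj1 Hj2; rewrite prE; case: ifP => //; lia.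
by apply: submxMr; apply/(mem2 _ Hk); rewrite Hz.
Qed.

Lemma f3a : (G k :&: kermx rh <= (S1 k :&: kermx rh) + (S2 k :&: kermx rh))%MS.
Proof.
have Ht := tau_ge0 hpq.
apply: rows_sub => u; rewrite sub_capmx => /andP [/(memG _ Hk) Bz /memK Hz].
have B1 := bulk_restr hpq (l := L - k%:Z) (r := R) Bz (fun j Hj1 Hj2 => ltac:(rewrite /in_rangeb; lia)).
have B2 := bulk_restr hpq (l := L) (r := R + k%:Z) Bz (fun j Hj1 Hj2 => ltac:(rewrite /in_rangeb; lia)).
have D1 : dW (eW (pr (L - k%:Z) R (dW u))) = pr (L - k%:Z) R (dW u).
  by apply: (dW_eW B1) => j; apply: inW1.
have D2 : dW (eW (pr L (R + k%:Z) (dW u))) = pr L (R + k%:Z) (dW u).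
  by apply: (dW_eW B2) => j; apply: inW2.
move/(bulkP a hpq): (Bz) => [Hs _].
have -> : u = eW (pr (L - k%:Z) R (dW u)) + eW (pr L (R + k%:Z) (dW u)).
  rewrite -[eW _]scale1r -enc_lin -[LHS](enc_dec bW); apply: enc_ext => j _.
  rewrite scale1r !prE.
  case: (boolP (j < L)) => Hj.
    rewrite [X in _ = _ + X]/= (_ : (L <= j) = false) ?addr0 /=; last by lia.
    case: ifP => // H; rewrite Hs // /in_rangeb; lia.
  case: (boolP (j <= R)) => Hj2.
    rewrite Hz ?if_same ?addr0 //; lia.
  rewrite andbF add0r.
  case: ifP => // H; rewrite Hs // /in_rangeb; lia.
apply: addmx_sub_adds; rewrite sub_capmx; apply/andP; split.
- by apply/(mem1 _ Hk); rewrite D1.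
- by apply/memK => j Hj1 Hj2; rewrite D1 prE Hz //; case: ifP.
- by apply/(mem2 _ Hk); rewrite D2.
- by apply/memK => j Hj1 Hj2; rewrite D2 prE Hz //; case: ifP.
Qed.

Lemma f3b : ((S1 k :&: kermx rh) + (S2 k :&: kermx rh) <= G k :&: kermx rh)%MS.
Proof.
have Ht := tau_ge0 hpq.
rewrite addsmx_sub; apply/andP; split; apply: rows_sub => u; rewrite !sub_capmx => /andP [H1 H2];
  rewrite H2 andbT; move/memK: H2 => Hz; apply/(memG _ Hk).
  move/(mem1 _ Hk): H1 => B1.
  by apply: (bulk_extR hpq (L := L) _ hLR B1 Hz); lia.
move/(mem2 _ Hk): H1 => B2.
by apply: (bulk_extL hpq (R := R) _ hLR B2 Hz); lia.
Qed.

Lemma f4 : ((S1 k :&: kermx rh) :&: (S2 k :&: kermx rh))%MS = 0.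
Proof.
apply/eqP; rewrite -submx0; apply: rows_sub => u.
rewrite !sub_capmx => /andP [/andP [/(mem1 _ Hk) B1 /memK Hz] /andP [/(mem2 _ Hk) B2 _]].
have -> : u = 0; last exact: sub0mx.
rewrite -[u](enc_dec bW) -(enc0 C d bW nW); apply: enc_ext => j _.
move/(bulkP a hpq): B1 => [Hs1 _]; move/(bulkP a hpq): B2 => [Hs2 _].
case: (boolP (j < L)) => Hj; first by apply: Hs2; rewrite /in_rangeb; lia.
case: (boolP (j <= R)) => Hj2; first by apply: Hz; lia.
by apply: Hs1; rewrite /in_rangeb; lia.
Qed.

Lemma rkS l m : bW <= l -> l + (m + tn)%:Z <= bW + nW%:Z -> \rank (SP l m) = (tn * d)%N.
Proof. exact: (rank_SPW hpq hout hreg). Qed.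

Lemma rk1 : \rank (S1 k) = (tn * d)%N.
Proof. by apply: rkS; have := Req; have := bWnW; rewrite /bW; lia. Qed.
Lemma rk2 : \rank (S2 k) = (tn * d)%N.
Proof. by apply: rkS; have := Req; have := bWnW; rewrite /bW; lia. Qed.
Lemma rkG : \rank (G k) = (tn * d)%N.
Proof. by apply: rkS; have := Req; have := bWnW; rewrite /bW; lia. Qed.

Lemma rank_sum : \rank (S1 k *m rh + S2 k *m rh)%MS = (tn * d)%N.
Proof.
have e1 := mxrank_mul_ker (S1 k) rh.
have e2 := mxrank_mul_ker (S2 k) rh.
have e3 := mxrank_mul_ker (G k) rh.
have e4 := mxrank_sum_cap (S1 k *m rh) (S2 k *m rh).
have e5 : \rank (S1 k *m rh :&: S2 k *m rh)%MS = \rank (G k *m rh).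
  by apply/eqP; rewrite eqn_leq !mxrankS // ?f2a ?f2b.
have e6 : \rank (G k :&: kermx rh)%MS = \rank ((S1 k :&: kermx rh) + (S2 k :&: kermx rh))%MS.
  by apply/eqP; rewrite eqn_leq !mxrankS // ?f3a ?f3b.
have e7 := mxrank_disjoint_sum f4.
move: e1 e2 e3 e4 e5 e6 e7; rewrite rk1 rk2 rkG; lia.
Qed.

Lemma decomp_mx : (S0 <= S1 k *m rh + S2 k *m rh)%MS.
Proof.
have [F1 F2] := f1 Hk.
have Hsub : (S1 k *m rh + S2 k *m rh <= S0)%MS by rewrite addsmx_sub F1 F2.
rewrite -(mxrank_leqif_sup Hsub).2 rank_sum.
have Hl : bW <= L by rewrite /bW; lia.
have Hr : L + (M0 + tn)%:Z <= bW + nW%:Z by have := Req; have := bWnW; lia.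
by rewrite /S0 (rkS Hl Hr).
Qed.

Lemma fin_decomp psi : bulk (Some L) (Some R) psi ->
  exists chi eta, bulk (Some (L - k%:Z)) (Some R) chi /\ bulk (Some L) (Some (R + k%:Z)) eta /\
    forall j, L <= j -> j <= R -> psi j = chi j + eta j.
Proof.
move=> Bp.
have Hu : (eW psi <= S0)%MS by apply/mem0; rewrite (dW_eW Bp) //; exact: inW0.
move: (submx_trans Hu decomp_mx) => /sub_addsmxP [[D1 D2] /= E].
exists (dW (D1 *m S1 k)), (dW (D2 *m S2 k)); split; first by apply/(mem1 _ Hk); exact: submxMl.
split; first by apply/(mem2 _ Hk); exact: submxMl.
move=> j Hj1 Hj2.
have Hd := dW_eW Bp (fun j => @inW0 j).
have := congr1 (fun w => dW w j) E; rewrite Hd => ->.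
rewrite [D1 *m (S1 k *m rh)]mulmxA [D2 *m (S2 k *m rh)]mulmxA -[(D1 *m S1 k) *m rh]scale1r dec_lin scale1r !rhoE' !dW_pr !prE.
by have -> : (L <= j) && (j <= R) by lia.
Qed.

End WithK.


Lemma rk0 : \rank S0 = (tn * d)%N.
Proof. by apply: rkS; have := Req; have := bWnW; rewrite /bW; lia. Qed.

Lemma g1 k : (k.+1 <= K)%N -> (S1 k.+1 *m rh <= S1 k *m rh)%MS.
Proof.
move=> Hk; have Ht := tau_ge0 hpq.
apply: rows_subM => v /(mem1 _ Hk) Bv.
have B1 := bulk_restr hpq (l := L - k%:Z) (r := R) Bv (fun j Hj1 Hj2 => ltac:(rewrite /in_rangeb; lia)).
have Hz : dW (eW (pr (L - k%:Z) R (dW v))) = pr (L - k%:Z) R (dW v).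
  by apply: (dW_eW B1) => j; apply: (@inW1 k) => //; lia.
have -> : v *m rh = eW (pr (L - k%:Z) R (dW v)) *m rh.
  rewrite !rhoE' Hz; congr eW; apply: pr_ext => j Hj1 Hj2; rewrite prE; case: ifP => //; lia.
by apply: submxMr; apply/(mem1 _ (ltnW Hk)); rewrite Hz.
Qed.

Lemma g1' k : (k.+1 <= K)%N -> (S2 k.+1 *m rh <= S2 k *m rh)%MS.
Proof.
move=> Hk; have Ht := tau_ge0 hpq.
apply: rows_subM => v /(mem2 _ Hk) Bv.
have B1 := bulk_restr hpq (l := L) (r := R + k%:Z) Bv (fun j Hj1 Hj2 => ltac:(rewrite /in_rangeb; lia)).
have Hz : dW (eW (pr L (R + k%:Z) (dW v))) = pr L (R + k%:Z) (dW v).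
  by apply: (dW_eW B1) => j; apply: (@inW2 k) => //; lia.
have -> : v *m rh = eW (pr L (R + k%:Z) (dW v)) *m rh.
  rewrite !rhoE' Hz; congr eW; apply: pr_ext => j Hj1 Hj2; rewrite prE; case: ifP => //; lia.
by apply: submxMr; apply/(mem2 _ (ltnW Hk)); rewrite Hz.
Qed.

Lemma stab_exists : (tn * d < K)%N ->
  exists k0, (k0 <= tn * d)%N /\ (S1 k0 *m rh <= S1 k0.+1 *m rh)%MS.
Proof.
move=> HK; apply: (chain_stab (U := fun k => S1 k *m rh) HK); first exact: g1.
by rewrite -rk0 mxrankS //; case: (f1 (leq0n K)).
Qed.

Lemma stab_exists' : (tn * d < K)%N ->
  exists k0, (k0 <= tn * d)%N /\ (S2 k0 *m rh <= S2 k0.+1 *m rh)%MS.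
Proof.
move=> HK; apply: (chain_stab (U := fun k => S2 k *m rh) HK); first exact: g1'.
by rewrite -rk0 mxrankS //; case: (f1 (leq0n K)).
Qed.

Lemma stab_dseq k0 : (k0.+1 <= K)%N -> (S1 k0 *m rh <= S1 k0.+1 *m rh)%MS ->
  forall chi, bulk (Some (L - k0%:Z)) (Some R) chi ->
  exists chi', bulk (Some (L - k0%:Z - 1)) (Some R) chi' /\
    (forall j, L <= j -> j <= R -> chi' j = chi j).
Proof.
move=> Hk Hs chi Bc.
have Hz : dW (eW chi) = chi by apply: (dW_eW Bc) => j; apply: (@inW1 k0) => //; lia.
have : (eW chi *m rh <= S1 k0.+1 *m rh)%MS.
  by apply: submx_trans Hs; apply: submxMr; apply/(mem1 _ (ltnW Hk)); rewrite Hz.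
case/submxMP => v [Hv E]; exists (dW v); split.
  by move/(mem1 _ Hk): Hv; apply: bulk_eqw; lia.
by apply: eq_of_rho; rewrite -rhoE' -E rhoE' Hz.
Qed.

Lemma stab_dseq' k0 : (k0.+1 <= K)%N -> (S2 k0 *m rh <= S2 k0.+1 *m rh)%MS ->
  forall chi, bulk (Some L) (Some (R + k0%:Z)) chi ->
  exists chi', bulk (Some L) (Some (R + k0%:Z + 1)) chi' /\
    (forall j, L <= j -> j <= R -> chi' j = chi j).
Proof.
move=> Hk Hs chi Bc.
have Hz : dW (eW chi) = chi by apply: (dW_eW Bc) => j; apply: (@inW2 k0) => //; lia.
have : (eW chi *m rh <= S2 k0.+1 *m rh)%MS.
  by apply: submx_trans Hs; apply: submxMr; apply/(mem2 _ (ltnW Hk)); rewrite Hz.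
case/submxMP => v [Hv E]; exists (dW v); split.
  by move/(mem2 _ Hk): Hv; apply: bulk_eqw; lia.
by apply: eq_of_rho; rewrite -rhoE' -E rhoE' Hz.
Qed.

End Count.

Unset Implicit Arguments.

Theorem mainTheorem10 (C : numClosedFieldType) (d : nat) (hd : (0 < d)%N)
    (a : int -> 'M[C]_d) (p q : int)
    (hband : bandwidth a p q) (hreg : regular a p q)
    (L R : int) (hLR : L <= R) (htau : tau p q <= R - L) :
  forall psi : dseq C d,
    bulk a p q (Some L) (Some R) psi <->
    in_span (fun v : dseq C d =>
               (exists phi, bulk a p q None (Some R) phi /\
                            v = proj (Some L) (Some R) phi) \/
               (exists phi, bulk a p q (Some L) None phi /\
                            v = proj (Some L) (Some R) phi)) psi.
Proof.
move: hband => [hpq [_ [_ hout]]].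
have Ht := tau_ge0 hpq.
move=> psi; split.
  move=> Bp.
  pose K := (absz (tau p q) * d).+1.
  have HK : (absz (tau p q) * d < K)%N by [].
  have [k0 [Hk0 Hs0]] := stab_exists hpq hout hreg htau HK.
  have [k1 [Hk1 Hs1]] := stab_exists' hpq hout hreg htau HK.
  have st0 := stab_dseq hpq htau (ltac:(lia) : (k0.+1 <= K)%N) Hs0.
  have st1 := stab_dseq' hpq htau (ltac:(lia) : (k1.+1 <= K)%N) Hs1.
  have HkK : (maxn k0 k1 <= K)%N by lia.
  have [chi [eta [Bc [Be Hpe]]]] := fin_decomp hpq hout hreg htau HkK Bp.
  have Bc0 := bulk_restr hpq (l := L - k0%:Z) (r := R) Bc (fun j Hj1 Hj2 => ltac:(rewrite /in_rangeb; lia)).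
  have Be1 := bulk_restr hpq (l := L) (r := R + k1%:Z) Be (fun j Hj1 Hj2 => ltac:(rewrite /in_rangeb; lia)).
  set phi1 := phi_inf hpq htau st0 Bc0.
  set phi2 := phi_infR hpq htau st1 Be1.
  have B1 : bulk a p q None (Some R) phi1 := phi_inf_bulk hpq htau st0 Bc0.
  have B2 : bulk a p q (Some L) None phi2 := phi_infR_bulk hpq htau st1 Be1.
  have A1 : forall j, L <= j -> j <= R -> phi1 j = chi j.
    move=> j Hj1 Hj2; rewrite /phi1 (phi_inf_agree hpq htau st0 Bc0) // prE.
    by case: ifP => //; lia.
  have A2 : forall j, L <= j -> j <= R -> phi2 j = eta j.
    move=> j Hj1 Hj2; rewrite /phi2 (phi_infR_agree hpq htau st1 Be1) // prE.
    by case: ifP => //; lia.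
  exists [:: (1, proj (Some L) (Some R) phi1); (1, proj (Some L) (Some R) phi2)]; split.
    move=> x /= [<-|[<-|[]]] /=.
      by left; exists phi1.
    by right; exists phi2.
  apply: functional_extensionality => j.
  rewrite !big_cons big_nil !scale1r addr0 /proj /=.
  case: ifP => Hj.
    have [Hj1 Hj2] : L <= j /\ j <= R by move: Hj; rewrite /in_rangeb; lia.
    by rewrite A1 // A2 // Hpe.
  move/(bulkP a hpq): Bp => [Hs _]; rewrite Hs ?addr0 //; by rewrite Hj.
move=> [s [Hs ->]].
have bext : forall (f g : dseq C d), (forall j, f j = g j) ->
    bulk a p q (Some L) (Some R) f -> bulk a p q (Some L) (Some R) g.
  by move=> f g H; rewrite (functional_extensionality f g H).
elim: s Hs => [|x s IH] Hs.
  by apply: (bext _ _ _ (bulk0 a hpq _ _)) => j; rewrite big_nil.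
apply: (bext (fun j => x.1 *: x.2 j + \sum_(y <- s) y.1 *: y.2 j)).
  by move=> j; rewrite big_cons.
apply: bulk_lin => //; last by apply: IH => y Hy; apply: Hs; right.
have [[phi [Bphi ->]]|[phi [Bphi ->]]] := Hs x (or_introl erefl).
  apply: (bulk_restr hpq (l := L) (r := R) Bphi) => j Hj1 Hj2; rewrite /in_rangeb; lia.
apply: (bulk_restr hpq (l := L) (r := R) Bphi) => j Hj1 Hj2; rewrite /in_rangeb; lia.
Qed.
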